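(* Let $\mathcal{X}\subset\mathbb{R}^d$ and let $X=(X_n)_{n\ge0}$ be the Markov chain on $\mathcal{X}$ given by $X_{n+1}=f_{n+1}(X_n)$, $n=0,1,2,\dots$, where $f_1,f_2,\dots$ are iid copies of a random mapping $f:\mathcal{X}\to\mathcal{X}$ which is almost surely locally Lipschitz. Fix a function $U:\mathcal{X}\to\mathbb{R}_+$ with $\inf_{\mathcal{X}} U>0$, and suppose that the inequality $KW\le W-U$ (pointwise on $\mathcal{X}$) has a non-negative finite solution $W_*$. Define $$V_*(x)=\mathbb{E}_x\Big[\sum_{k=0}^\infty U(X_k)\prod_{l=1}^{k}Df_l(X_{l-1})\Big],\qquad x\in\mathcal{X}.$$ Then $V_*$ is finite and satisfies $KV_*=V_*-U$ on $\mathcal{X}$. Furthermore, the equation $KV=V-U$ has at most one bounded solution.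
   Context: $\|\cdot\|$ is the Euclidean norm and $B_\delta(x)=\{x':\|x'-x\|<\delta\}$. For a locally Lipschitz map $g$, its local Lipschitz constant at $x$ is $Dg(x)=\lim_{\delta\to0}\sup_{x',x''\in B_\delta(x)}\frac{\|g(x')-g(x'')\|}{\|x'-x''\|}$. For a function $V:\mathcal{X}\to\mathbb{R}_+$, the operator $K$ is defined by $KV(x)=\mathbb{E}\,[Df(x)\,V(f(x))]$. $\mathbb{E}_x$ denotes expectation conditional on $X_0=x$, and the empty product (for $k=0$) equals $1$. Functions $V$ considered as solutions of $KV=V-U$ are non-negative functions on $\mathcal{X}$. *)

(* Defs.v *)
From HB Require Import structures.
From mathcomp Require Import all_boot all_order all_algebra.
From mathcomp Require Import all_classical all_reals all_analysis measurable_realfun.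
Set Implicit Arguments. Unset Strict Implicit. Unset Printing Implicit Defensive.
Import Order.TTheory GRing.Theory Num.Theory.
Local Open Scope classical_set_scope.
Local Open Scope ring_scope.

(* Points of R^d are represented as d-tuples of reals; the library equips
   [d.-tuple R] with the product (= Borel) sigma-algebra. *)

Definition edist {R : realType} {d : nat} (x y : d.-tuple R) : R :=
  Num.sqrt (\sum_(i < d) (tnth x i - tnth y i) ^+ 2).

Definition lip_ratios {R : realType} {d : nat} (X : set (d.-tuple R))
  (g : d.-tuple R -> d.-tuple R) (x : d.-tuple R) (delta : R) : set (\bar R) :=
  [set r | exists y z, [/\ X y, X z, edist y x < delta, edist z x < delta &
      y <> z] /\ r = (edist (g y) (g z) / edist y z)%:E].

(* Local Lipschitz constant Dg(x) = lim_{delta -> 0} sup_{x',x'' in B_delta(x)} ...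
   The sup is nonincreasing in delta, so the limit is the infimum over delta > 0.
   (sup of the empty set is taken to be 0; values lie in [0, +oo].) *)
Definition Dloc {R : realType} {d : nat} (X : set (d.-tuple R))
  (g : d.-tuple R -> d.-tuple R) (x : d.-tuple R) : \bar R :=
  ereal_inf [set ereal_sup (0%E |` lip_ratios X g x delta) | delta in [set e : R | 0 < e]].

Definition loc_lipschitz {R : realType} {d : nat} (X : set (d.-tuple R))
  (g : d.-tuple R -> d.-tuple R) : Prop :=
  forall x, X x -> exists2 delta : R, 0 < delta & exists L : R,
    forall y z, X y -> X z -> edist y x < delta -> edist z x < delta ->
      edist (g y) (g z) <= L * edist y z.

Definition Kop {R : realType} {d : nat} {dT : measure_display} {Theta : measurableType dT}
  (mu : probability Theta R) (X : set (d.-tuple R))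
  (F : Theta -> d.-tuple R -> d.-tuple R) (V : d.-tuple R -> \bar R)
  (x : d.-tuple R) : \bar R :=
  (\int[mu]_t (Dloc X (F t) x * V (F t x)))%E.

Definition iid_seq {R : realType} {dO dT : measure_display}
  {Omega : measurableType dO} {Theta : measurableType dT}
  (P : probability Omega R) (mu : probability Theta R)
  (theta : nat -> Omega -> Theta) : Prop :=
  [/\ (forall n, measurable_fun setT (theta n)),
      (forall n (A : set Theta), measurable A -> P (theta n @^-1` A) = mu A) &
      (forall (I : seq nat) (A : nat -> set Theta), uniq I ->
         (forall i, measurable (A i)) ->
         P (\bigcap_(i in [set` I]) (theta i @^-1` A i)) =
         (\prod_(i <- I) P (theta i @^-1` A i))%E)].

(* The Markov chain X_0 = x, X_{n+1} = f_{n+1}(X_n) with f_{n+1} = F (theta n). *)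
Fixpoint chain {d : nat} {R : realType} {Omega Theta : Type}
  (F : Theta -> d.-tuple R -> d.-tuple R) (theta : nat -> Omega -> Theta)
  (x : d.-tuple R) (n : nat) (w : Omega) : d.-tuple R :=
  match n with
  | 0 => x
  | n.+1 => F (theta n w) (chain F theta x n w)
  end.

Definition Vstar {R : realType} {d : nat} {dO dT : measure_display}
  {Omega : measurableType dO} {Theta : measurableType dT}
  (P : probability Omega R) (X : set (d.-tuple R))
  (F : Theta -> d.-tuple R -> d.-tuple R) (theta : nat -> Omega -> Theta)
  (U : d.-tuple R -> R) (x : d.-tuple R) : \bar R :=
  (\int[P]_w (\sum_(k <oo)
     ((U (chain F theta x k w))%:E *
      \prod_(l < k) Dloc X (F (theta l w)) (chain F theta x l w))))%E.

(* Main.v *)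
Require Import Defs.
From HB Require Import structures.
From mathcomp Require Import all_boot all_order all_algebra.
From mathcomp Require Import all_classical all_reals all_analysis measurable_realfun.
From mathcomp Require Import lra.
Import Order.TTheory GRing.Theory Num.Theory.
Local Open Scope classical_set_scope.
Local Open Scope ring_scope.

Section indep.
Context (R : realType) (dO dT : measure_display) (Omega : measurableType dO)
  (Theta : measurableType dT) (P : probability Omega R) (mu : probability Theta R)
  (theta : nat -> Omega -> Theta).
Hypothesis mth : forall n, measurable_fun setT (theta n).
Hypothesis lawth : forall n (A : set Theta), measurable A -> P (theta n @^-1` A) = mu A.
Hypothesis indth : forall (I : seq nat) (A : nat -> set Theta), uniq I ->
  (forall i, measurable (A i)) ->
  P (\bigcap_(i in [set` I]) (theta i @^-1` A i)) =
  (\prod_(i <- I) P (theta i @^-1` A i))%E.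

Lemma iotaE n j : [set` iota 0 n] j = (j < n)%N :> Prop.
Proof. by rewrite /= mem_iota. Qed.

Lemma mpre i A : measurable A -> measurable (theta i @^-1` A).
Proof. by move=> mA; rewrite -[X in measurable X]setTI; exact: mth. Qed.

Definition Box n : set (set Omega) := [set S | exists A : nat -> set Theta,
  (forall i, measurable (A i)) /\
  S = \bigcap_(i in [set` iota 0 n]) (theta i @^-1` A i)].

Lemma Box_meas n S : Box n S -> measurable S.
Proof.
case=> A [mA ->]; case: n => [|n].
  by rewrite (_ : [set` iota 0 0] = set0) ?bigcap_set0 //; apply/seteqP; split.
apply: bigcap_measurable; first by exists 0%N.
by move=> k _; exact: mpre.
Qed.

Lemma Box_setI n : setI_closed (Box n).
Proof.
move=> _ _ [A [mA ->]] [B [mB ->]]; exists (fun i => A i `&` B i); split.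
  by move=> i; exact: measurableI.
apply/seteqP; split => w /=.
  by move=> [HA HB] i Hi; split; [exact: HA|exact: HB].
by move=> H; split => i Hi; have [] := H i Hi.
Qed.

Lemma Box_T n : Box n setT.
Proof. by exists (fun=> setT); split => //; apply/seteqP; split. Qed.

Lemma Box_theta n i A : (i < n)%N -> measurable A -> Box n (theta i @^-1` A).
Proof.
move=> ilt mA; exists (fun j => if j == i then A else setT); split.
  by move=> j; case: ifP.
apply/seteqP; split => w /=.
  by move=> Aw j _; case: ifP => // /eqP ->.
by move=> /(_ i); rewrite eqxx; apply; rewrite iotaE.
Qed.

Lemma Box_mono n m : (n <= m)%N -> Box n `<=` Box m.
Proof.
move=> nm _ [A [mA ->]]; exists (fun j => if (j < n)%N then A j else setT); split.
  by move=> j; case: ifP.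
apply/seteqP; split => w /=.
  move=> H j; rewrite iotaE => jm; case: ifP => // jn.
  by apply: H; rewrite iotaE.
move=> H j; rewrite iotaE => jn.
by have := H j; rewrite !iotaE jn (leq_trans jn nm); apply.
Qed.

Definition GS n := <<s Box n >>.

Lemma GS_meas n : GS n `<=` measurable.
Proof.
apply: smallest_sub; first exact: sigma_algebra_measurable.
by move=> S; exact: Box_meas.
Qed.

Lemma GS_mono n m : (n <= m)%N -> GS n `<=` GS m.
Proof.
move=> nm; apply: smallest_sub; first exact: smallest_sigma_algebra.
by move=> S /(@Box_mono _ _ nm) BS; exact: sub_sigma_algebra.
Qed.

Lemma GS_theta n i A : (i < n)%N -> measurable A -> GS n (theta i @^-1` A).
Proof. by move=> ilt mA; apply: sub_sigma_algebra; exact: Box_theta. Qed.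

Lemma prodP (A : nat -> set Theta) n : (forall i, measurable (A i)) ->
  P (\bigcap_(i in [set` iota 0 n]) (theta i @^-1` A i)) =
  (\prod_(i <- iota 0 n) P (theta i @^-1` A i))%E.
Proof. by move=> mA; apply: indth => //; exact: iota_uniq. Qed.

Lemma indep_A n B S : measurable B -> GS n S ->
  P (S `&` theta n @^-1` B) = (mu B * P S)%E.
Proof.
move=> mB GSS.
have mid : measurable_fun setT (id : Omega -> g_sigma_algebraType (Box n)).
  move=> _ Y mY; suff -> : [set: Omega] `&` id @^-1` Y = Y by exact: (@GS_meas n Y mY).
  by apply/seteqP; split=> w //= [].
pose m1 := measure_function_pushforward__canonical__measure_function_Measure
  (measure_function_mrestr__canonical__measure_function_Measure P (@mpre n B mB)) mid.
pose r : {nonneg R} := NngNum (fine_ge0 (measure_ge0 mu B)).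
pose m2 := measure_function_mscale__canonical__measure_function_Measure r
  (measure_function_pushforward__canonical__measure_function_Measure P mid).
have muBE : ((fine (mu B))%:E = mu B)%E by rewrite fineK // fin_num_measure.
have H1 : forall A, Box n A -> m1 A = m2 A.
  move=> _ [A [mA ->]]; rewrite /m1 /m2 /= /pushforward /mrestr /mscale /=.
  rewrite !preimage_id muBE /pushforward preimage_id prodP //.
  pose A' j := if j == n then B else A j.
  have mA' : forall j, measurable (A' j) by move=> j; rewrite /A'; case: ifP.
  have E1 := @prodP A' n.+1 mA'.
  have E2 : \bigcap_(i in [set` iota 0 n.+1]) theta i @^-1` A' i =
      \bigcap_(i in [set` iota 0 n]) theta i @^-1` A i `&` theta n @^-1` B.
    apply/seteqP; split => w.
      move=> H; split.
        move=> j; rewrite iotaE => jn; have := H j; rewrite iotaE /A'.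
        by rewrite (ltn_trans jn (ltnSn n)) (ltn_eqF jn); apply.
      by have := H n; rewrite iotaE /A' ltnSn eqxx; apply.
    move=> [H1 H2] j; rewrite iotaE ltnS leq_eqVlt /A'.
    case/orP => [/eqP ->|jn]; first by rewrite eqxx.
    by rewrite (ltn_eqF jn); apply: H1; rewrite iotaE.
  rewrite E2 -addn1 iotaD big_cat big_seq1 /= /A' eqxx in E1.
  rewrite E1.
  rewrite lawth // muleC; congr (_ * _)%E.
  apply: eq_big_seq => j; rewrite mem_iota add0n => jn.
  by rewrite (ltn_eqF jn).
have H2 : forall k : nat, (m1 setT < +oo)%E.
  move=> k; rewrite /m1 /= /pushforward /mrestr /= preimage_id.
  apply: (le_lt_trans (probability_le1 _ _)); last exact: ltey.
  by apply: measurableI => //; exact: mpre.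
have := @measure_unique _ R (g_sigma_algebraType (Box n)) (Box n) (fun=> setT)
   erefl (@Box_setI n) (fun=> Box_T n) (bigcup_const _ _) m1 m2 H1 H2 S GSS.
rewrite /m1 /m2 /= /pushforward /mrestr /mscale /= preimage_id muBE.
by apply; exists 0%N.
Qed.

Lemma indep_B n d' (T' : measurableType d') (Y : Omega -> T')
  (mYG : forall B, measurable B -> GS n (Y @^-1` B))
  (g : Theta * T' -> \bar R) : measurable_fun setT g -> (forall z, 0 <= g z)%E ->
  (\int[P]_w g (theta n w, Y w) = \int[P]_w \int[mu]_t g (t, Y w))%E.
Proof.
move=> mg g0.
have mY : measurable_fun setT Y.
  move=> _ B mB; suff -> : [set: Omega] `&` Y @^-1` B = Y @^-1` B by exact: (@GS_meas n _ (mYG B mB)).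
  by apply/seteqP; split=> w //= [].
have mZ : measurable_fun setT (fun w => (theta n w, Y w)).
  exact: measurable_fun_pair (mth n) mY.
pose Ym : {mfun Omega >-> T'} := HB.pack Y (isMeasurableFun.Build _ _ _ _ _ mY).
pose Zm : {mfun Omega >-> (Theta * T')%type} :=
  HB.pack (fun w => (theta n w, Y w)) (isMeasurableFun.Build _ _ _ _ _ mZ).
have E : forall E, measurable E -> (mu \x distribution P Ym)%E E = distribution P Zm E.
  apply: product_measure_unique => A B mA mB.
  change (P ((fun w => (theta n w, Y w)) @^-1` (A `*` B)) = mu A * P (Y @^-1` B))%E.
  have -> : (fun w => (theta n w, Y w)) @^-1` (A `*` B) =
      Y @^-1` B `&` theta n @^-1` A.
    by apply/seteqP; split => w [].
  by rewrite indep_A //; exact: mYG.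
transitivity (\int[distribution P Zm]_z g z)%E.
  by rewrite ge0_integral_distribution.
transitivity (\int[(mu \x distribution P Ym)%E]_z g z)%E.
  by apply: eq_measure_integral => A mA _; exact/esym/E.
rewrite fubini_tonelli2 // ge0_integral_distribution //.
- exact: measurable_fun_fubini_tonelli_G.
- by move=> y; apply: integral_ge0.
Qed.

End indep.

Lemma term_le_series (R : realType) (g : nat -> \bar R) k :
  (forall i, 0 <= g i)%E -> (g k <= \sum_(i <oo) g i)%E.
Proof.
move=> g0; apply: le_trans (nneseries_lim_ge k.+1 _); last by move=> *; exact: g0.
by rewrite big_nat_recr //=; apply: leeDr; apply: sume_ge0 => i _; exact: g0.
Qed.

Lemma mule_nneseries (R : realType) (a : \bar R) (f : nat -> \bar R) :
  (0 <= a)%E -> (forall k, 0 <= f k)%E ->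
  (a * \sum_(k <oo) f k = \sum_(k <oo) (a * f k))%E.
Proof.
move=> a0 f0; case: a a0 => [r r0| _ |//].
  by rewrite nneseriesZl.
have [H|H] := pselect (forall k, f k = 0%E).
  have -> : (\sum_(k <oo) f k = 0)%E by rewrite eseries0 // => i _ _; exact: H.
  by rewrite mule0 eseries0 // => i _ _; rewrite H mule0.
have [k fk] : exists k, f k <> 0%E.
  by apply: contrapT => H'; apply: H => k; apply: contrapT => Hk; apply: H'; exists k.
have fk0 : (0 < f k)%E by rewrite lt0e; apply/andP; split; [exact/eqP|exact: f0].
rewrite gt0_mulye; last exact: lt_le_trans fk0 (@term_le_series _ f k f0).
apply/esym/eqP; rewrite eq_le leey /= -[X in (X <= _)%E](gt0_mulye fk0).
apply: (@term_le_series _ (fun i => (+oo * f i)%E) k) => i.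
by apply: mule_ge0 => //; exact: f0.
Qed.

Section markov.
Context (R : realType) (d : nat) (dO dT : measure_display) (Omega : measurableType dO)
  (Theta : measurableType dT) (P : probability Omega R) (mu : probability Theta R)
  (theta : nat -> Omega -> Theta) (X : set (d.-tuple R))
  (F : Theta -> d.-tuple R -> d.-tuple R).
Hypothesis mth : forall n, measurable_fun setT (theta n).
Hypothesis lawth : forall n (A : set Theta), measurable A -> P (theta n @^-1` A) = mu A.
Hypothesis indth : forall (I : seq nat) (A : nat -> set Theta), uniq I ->
  (forall i, measurable (A i)) ->
  P (\bigcap_(i in [set` I]) (theta i @^-1` A i)) =
  (\prod_(i <- I) P (theta i @^-1` A i))%E.
Hypothesis mF : measurable_fun setT (fun p : Theta * d.-tuple R => F p.1 p.2).
Hypothesis mDl : measurable_fun setT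
  ((fun p : Theta * d.-tuple R => Dloc X (F p.1) p.2) : _ -> \bar R).

Local Notation T := (d.-tuple R).
Local Notation Dl t y := (Dloc X (F t) y).
Local Notation G n := (g_sigma_algebraType (@Box _ _ _ _ theta n)).

Lemma Dloc_ge0 g y : (0 <= Dloc X g y)%E.
Proof. by apply/ereal_infP => _ [e _ <-]; apply: ereal_sup_ubound; left. Qed.

Definition Kp (phi : T -> \bar R) (x : T) : \bar R :=
  (\int[mu]_t (Dl t x * phi (F t x)))%E.

Lemma mfun_sec (phi : T -> \bar R) : measurable_fun setT phi ->
  measurable_fun setT (fun p : Theta * T => Dl p.1 p.2 * phi (F p.1 p.2))%E.
Proof. by move=> mphi; apply: emeasurable_funM => //; exact: measurableT_comp mphi mF. Qed.

Lemma mfun_sec_t (phi : T -> \bar R) x : measurable_fun setT phi ->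
  measurable_fun setT (fun t => Dl t x * phi (F t x))%E.
Proof.
move=> mphi.
have mp : measurable_fun setT (fun t : Theta => (t, x)).
  by apply: measurable_fun_pair => //; exact: measurable_cst.
exact: (measurableT_comp (mfun_sec phi mphi) mp).
Qed.

Lemma Kp_ge0 phi x : (forall y, 0 <= phi y)%E -> (0 <= Kp phi x)%E.
Proof. by move=> phi0; apply: integral_ge0 => t _; apply: mule_ge0 => //; exact: Dloc_ge0. Qed.

Lemma Kp_meas phi : measurable_fun setT phi -> (forall y, 0 <= phi y)%E ->
  measurable_fun setT (Kp phi).
Proof.
move=> mphi phi0.
exact: (@measurable_fun_fubini_tonelli_G _ _ _ _ _ mu _ (mfun_sec phi mphi)
  (fun z => mule_ge0 (Dloc_ge0 _ _) (phi0 _))).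
Qed.

Lemma iter_ge0 n phi : (forall y, 0 <= phi y)%E -> forall y, (0 <= iter n Kp phi y)%E.
Proof. by elim: n => [//|n IH] phi0 y; rewrite iterS; apply: Kp_ge0; exact: IH. Qed.

Lemma iter_meas n phi : measurable_fun setT phi -> (forall y, 0 <= phi y)%E ->
  measurable_fun setT (iter n Kp phi).
Proof.
elim: n => [//|n IH] mphi phi0; rewrite iterS; apply: Kp_meas; first exact: IH.
exact: iter_ge0.
Qed.

Definition Pi x n w : \bar R :=
  (\prod_(l < n) Dl (theta l w) (chain F theta x l w))%E.

Lemma Pi_ge0 x n w : (0 <= Pi x n w)%E.
Proof. by apply: prode_ge0 => i _; exact: Dloc_ge0. Qed.

Lemma GmeasE n d' (T' : measurableType d') (f : Omega -> T') :
  measurable_fun setT (f : G n -> T') ->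
  forall B, measurable B -> GS _ _ _ _ theta n (f @^-1` B).
Proof.
move=> mf B mB; have := mf measurableT B mB.
by rewrite (_ : setT `&` _ = f @^-1` B) //; apply/seteqP; split=> w //= [].
Qed.

Lemma GmeasP n d' (T' : measurableType d') (f : Omega -> T') :
  (forall B, measurable B -> GS _ _ _ _ theta n (f @^-1` B)) ->
  measurable_fun setT (f : G n -> T').
Proof.
move=> H _ B mB; rewrite (_ : setT `&` _ = f @^-1` B); first exact: H.
by apply/seteqP; split=> w //= [].
Qed.

Lemma GmeasO n d' (T' : measurableType d') (f : Omega -> T') :
  measurable_fun setT (f : G n -> T') -> measurable_fun setT f.
Proof.
move=> /GmeasE H _ B mB; rewrite (_ : setT `&` _ = f @^-1` B).
  exact: (@GS_meas _ _ _ _ _ mth n _ (H B mB)).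
by apply/seteqP; split=> w //= [].
Qed.

Lemma chainY_meas x n : measurable_fun setT
  ((fun w => (chain F theta x n w, Pi x n w)) : G n -> (T * \bar R)%type).
Proof.
elim: n => [|n IH].
  rewrite (_ : (fun w => _) = cst (x, 1%E)); first exact: measurable_cst.
  by apply/funext => w; rewrite /Pi big_ord0.
have mth' : measurable_fun setT (theta n : G n.+1 -> Theta).
  by apply: GmeasP => B mB; exact: GS_theta.
have mY : measurable_fun setT
    ((fun w => (chain F theta x n w, Pi x n w)) : G n.+1 -> (T * \bar R)%type).
  apply: GmeasP => B mB; apply: (@GS_mono _ _ _ _ theta n n.+1 (leqnSn n)).
  exact: GmeasE IH B mB.
pose Psi (z : Theta * (T * \bar R)) := (F z.1 z.2.1, z.2.2 * Dl z.1 z.2.1)%E.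
have mp : measurable_fun setT (fun z : Theta * (T * \bar R) => (z.1, z.2.1)).
  apply: measurable_fun_pair; first exact: measurable_fst.
  exact: measurableT_comp measurable_fst measurable_snd.
have mPsi : measurable_fun setT Psi.
  apply: measurable_fun_pair; first exact: measurableT_comp mF mp.
  apply: emeasurable_funM; first exact: measurableT_comp measurable_snd measurable_snd.
  exact: measurableT_comp mDl mp.
suff -> : ((fun w => (chain F theta x n.+1 w, Pi x n.+1 w)) : G n.+1 -> _) =
    Psi \o (fun w => (theta n w, (chain F theta x n w, Pi x n w))).
  exact: measurableT_comp mPsi (measurable_fun_pair mth' mY).
by apply/funext => w; rewrite /Psi /Pi /= big_ord_recr.
Qed.

Lemma markov n : forall phi, measurable_fun setT phi -> (forall y, 0 <= phi y)%E ->
  forall x, (\int[P]_w (Pi x n w * phi (chain F theta x n w)) = iter n Kp phi x)%E.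
Proof.
elim: n => [|n IH] phi mphi phi0 x.
  have H := integral_cst P measurableT (phi x).
  have P1 := (@probability_setT _ Omega R P).
  transitivity (\int[P]_w (cst (phi x) w))%E.
    by apply: eq_integral => w _; rewrite /Pi big_ord0 mul1e.
  rewrite H -[RHS]mule1; congr (_ * _)%E; exact: P1.
pose h (p : Theta * T) := (Dl p.1 p.2 * phi (F p.1 p.2))%E.
pose g (z : Theta * (T * \bar R)) := (`|z.2.2| * h (z.1, z.2.1))%E.
have mg : measurable_fun setT g.
  apply: emeasurable_funM.
    exact: (measurableT_comp (@abse_measurable R setT)
      (measurableT_comp measurable_snd measurable_snd)).
  apply: (measurableT_comp (mfun_sec phi mphi)).
  apply: measurable_fun_pair; first exact: measurable_fst.
  exact: measurableT_comp measurable_fst measurable_snd.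
have g0 : forall z, (0 <= g z)%E.
  by move=> z; apply: mule_ge0 => //; apply: mule_ge0; [exact: Dloc_ge0|exact: phi0].
transitivity (\int[P]_w g (theta n w, (chain F theta x n w, Pi x n w)))%E.
  apply: eq_integral => w _; rewrite /g /h /Pi /= big_ord_recr /=.
  by rewrite gee0_abs ?muleA //; apply: prode_ge0 => i _; exact: Dloc_ge0.
rewrite (@indep_B _ _ _ _ _ P mu theta mth lawth indth n _ _ (fun w => (chain F theta x n w, Pi x n w)) (@GmeasE n _ _ _ (chainY_meas x n)) g mg g0).
transitivity (\int[P]_w (Pi x n w * Kp phi (chain F theta x n w)))%E.
  apply: eq_integral => w _; rewrite /g /h /= gee0_abs ?Pi_ge0 // /Kp.
  rewrite ge0_integralZl //; last exact: Pi_ge0.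
  - exact: mfun_sec_t.
  - by move=> t _; apply: mule_ge0; [exact: Dloc_ge0|exact: phi0].
rewrite IH //; last by move=> y; exact: Kp_ge0.
  by rewrite iterSr.
exact: Kp_meas.
Qed.

Variables (U W : d.-tuple R -> R).
Hypothesis FX : forall t x, X x -> X (F t x).
Hypothesis mU : measurable_fun setT U.
Variable c : R.
Hypothesis c0 : 0 < c.
Hypothesis Uc : forall x, X x -> c <= U x.
Hypothesis mW : measurable_fun setT W.
Hypothesis W0 : forall x, X x -> 0 <= W x.
Hypothesis KW : forall x, X x ->
  (Kop mu X F (fun y => (W y)%:E) x <= (W x - U x)%:E)%E.

Local Notation K := Kp.

Definition u (y : T) : \bar R := (Num.max (U y) 0)%:E.

Lemma u_ge0 y : (0 <= u y)%E.
Proof. by rewrite lee_fin le_max lexx orbT. Qed.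

Lemma u_meas : measurable_fun setT u.
Proof.
apply/measurable_EFinP; apply: measurable_maxr => //; exact: measurable_cst.
Qed.

Lemma uE y : X y -> u y = (U y)%:E.
Proof.
move=> Xy; rewrite /u; congr (_%:E); apply/max_idPl.
exact: le_trans (ltW c0) (Uc _ Xy).
Qed.

Lemma chain_in x n w : X x -> X (chain F theta x n w).
Proof. by move=> Xx; elim: n => [//|n IH] /=; exact: FX. Qed.

Lemma Ku_ge0 k y : (0 <= iter k K u y)%E.
Proof. by apply: iter_ge0; exact: u_ge0. Qed.

Lemma Ku_meas k : measurable_fun setT (iter k K u).
Proof. by apply: iter_meas; [exact: u_meas|exact: u_ge0]. Qed.

Lemma Vstar_eq x : X x ->
  Vstar P X F theta U x = (\sum_(k <oo) iter k K u x)%E.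
Proof.
move=> Xx; rewrite /Vstar integral_nneseries //.
- apply: eq_eseriesr => k _.
  rewrite -(markov k u u_meas u_ge0 x).
  apply: eq_integral => w _; rewrite muleC uE //; exact: chain_in.
- move=> k.
  have := GmeasO _ _ _ _ (chainY_meas x k).
  move/(measurableT_comp (f := fun z : T * \bar R => ((U z.1)%:E * z.2)%E)); apply.
  apply: emeasurable_funM; last exact: measurable_snd.
  apply/measurable_EFinP; exact: measurableT_comp mU measurable_fst.
- move=> k w _; apply: mule_ge0; last exact: Pi_ge0.
  rewrite lee_fin; apply: le_trans (ltW c0) (Uc _ _); exact: chain_in.
Qed.

Lemma K_sum n x : (\sum_(k < n) K (iter k K u) x =
  K (fun y => \sum_(k < n) iter k K u y) x)%E.
Proof.
rewrite /Kp -ge0_integral_sum //.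
- by apply: eq_integral => t _; rewrite ge0_sume_distrr // => k _; exact: Ku_ge0.
- by move=> k; exact: (mfun_sec_t _ x (Ku_meas k)).
- by move=> k t _; apply: mule_ge0; [exact: Dloc_ge0|exact: Ku_ge0].
Qed.

Lemma partial_le n x : X x -> (\sum_(k < n) iter k K u x <= (W x)%:E)%E.
Proof.
elim: n x => [|n IH] x Xx; first by rewrite big_ord0 lee_fin W0.
rewrite big_ord_recl /=.
under eq_bigr do rewrite add0n.
rewrite K_sum uE //.
apply: (@le_trans _ _ ((U x)%:E + Kop mu X F (fun y => (W y)%:E) x)%E).
  apply: leeD2l; apply: ge0_le_integral => //.
  - by move=> t _; apply: mule_ge0; [exact: Dloc_ge0|apply: sume_ge0 => k _; exact: Ku_ge0].
  - have ms : measurable_fun setT (fun y => \sum_(k < n) iter k K u y).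
      by apply: emeasurable_sum => k; exact: Ku_meas.
    exact: (mfun_sec_t _ x ms).
  - have ms : measurable_fun setT (fun y => (W y)%:E) by apply/measurable_EFinP.
    exact: (mfun_sec_t _ x ms).
  - move=> t _; apply: lee_wpmul2l; first exact: Dloc_ge0.
    exact: IH (FX t _ Xx).
apply: le_trans (leeD2l _ (KW _ Xx)) _.
by rewrite -EFinD addrC subrK.
Qed.

Lemma series_le x : X x -> (\sum_(k <oo) iter k K u x <= (W x)%:E)%E.
Proof.
move=> Xx; apply: lime_le.
  by apply: is_cvg_nneseries => k _ _; exact: Ku_ge0.
by apply: nearW => n; rewrite big_mkord; exact: partial_le.
Qed.

Lemma part1 x : X x -> (Vstar P X F theta U x < +oo)%E.
Proof. by move=> Xx; rewrite Vstar_eq //; apply: le_lt_trans (series_le _ Xx) _; exact: ltey. Qed.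

Lemma part2 x : X x ->
  Kop mu X F (Vstar P X F theta U) x = (Vstar P X F theta U x - (U x)%:E)%E.
Proof.
move=> Xx; rewrite Vstar_eq // /Kop.
transitivity (\int[mu]_t (\sum_(k <oo) (Dl t x * iter k K u (F t x))))%E.
  apply: eq_integral => t _; rewrite Vstar_eq; last exact: FX.
  by rewrite mule_nneseries //; [exact: Dloc_ge0|move=> k; exact: Ku_ge0].
rewrite integral_nneseries //; last first.
  by move=> k t _; apply: mule_ge0; [exact: Dloc_ge0|exact: Ku_ge0].
  by move=> k; exact: (mfun_sec_t _ x (Ku_meas k)).
rewrite nneseries_recl //; last by move=> k _; exact: Ku_ge0.
rewrite -nneseries_addn; last by move=> k; exact: Ku_ge0.
rewrite /= uE // addeAC -EFinD subrr add0e.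
by apply: eq_eseriesr => k _; rewrite addn1 iterS.
Qed.


Section uniq.
Variables (V1 V2 : d.-tuple R -> R).
Hypotheses (mV1 : measurable_fun setT V1) (mV2 : measurable_fun setT V2).
Hypothesis V10 : forall x, X x -> 0 <= V1 x.
Hypothesis V20 : forall x, X x -> 0 <= V2 x.
Variable M : R.
Hypothesis V1M : forall x, X x -> V1 x <= M.
Hypothesis KV1 : forall x, X x -> Kop mu X F (fun y => (V1 y)%:E) x = (V1 x - U x)%:E.
Hypothesis KV2 : forall x, X x -> Kop mu X F (fun y => (V2 y)%:E) x = (V2 x - U x)%:E.

Let hp y := Num.max (V1 y - V2 y) 0.
Let hpE y : (0 <= hp y).
Proof. by rewrite le_max lexx orbT. Qed.
Let mhp : measurable_fun setT (fun y => (hp y)%:E).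
Proof.
apply/measurable_EFinP; apply: measurable_maxr; last exact: measurable_cst.
exact: measurable_funB.
Qed.
Let m_V1 : measurable_fun setT (fun y => (V1 y)%:E). Proof. exact/measurable_EFinP. Qed.
Let m_V2 : measurable_fun setT (fun y => (V2 y)%:E). Proof. exact/measurable_EFinP. Qed.
Let m_W : measurable_fun setT (fun y => (W y)%:E). Proof. exact/measurable_EFinP. Qed.

Let fact1 x : X x -> ((hp x)%:E <= K (fun y => (hp y)%:E) x)%E.
Proof.
move=> Xx.
have [h0|h0] := leP (V1 x - V2 x) 0.
  by rewrite {1}/hp (max_idPr h0); apply: Kp_ge0 => y; rewrite lee_fin; exact: hpE.
rewrite {1}/hp (max_idPl (ltW h0)).
have H : ((V1 x - U x)%:E <= (V2 x - U x)%:E + K (fun y => (hp y)%:E) x)%E.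
  rewrite -KV1 // -KV2 // /Kop /Kp -ge0_integralD //.
  - apply: ge0_le_integral => //.
    + by move=> t _; apply: mule_ge0; [exact: Dloc_ge0|rewrite lee_fin; apply: V10; exact: FX].
    + exact: (mfun_sec_t _ x m_V1).
    + apply: emeasurable_funD; [exact: (mfun_sec_t _ x m_V2)|exact: (mfun_sec_t _ x mhp)].
    + move=> t _; rewrite -ge0_muleDr ?lee_fin ?V20 ?hpE //; last exact: FX.
      apply: lee_wpmul2l; first exact: Dloc_ge0.
      by rewrite lee_fin -lerBlDl le_max lexx.
  - by move=> t _; apply: mule_ge0; [exact: Dloc_ge0|rewrite lee_fin; apply: V20; exact: FX].
  - exact: (mfun_sec_t _ x m_V2).
  - by move=> t _; apply: mule_ge0; [exact: Dloc_ge0|rewrite lee_fin hpE].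
  - exact: (mfun_sec_t _ x mhp).
move: H; have : (0 <= K (fun y => (hp y)%:E) x)%E.
  by apply: Kp_ge0 => y; rewrite lee_fin hpE.
case: (K _ x) => [r _|_ _|//]; last exact: leey.
by rewrite -EFinD !lee_fin => H; lra.
Qed.

Lemma uniq_le x : X x -> V1 x <= V2 x.
Proof.
pose M' := Num.max M 0.
have M'0 : 0 <= M' by rewrite le_max lexx orbT.
pose Mc := M' / c.
have Mc0 : 0 <= Mc by apply: divr_ge0 => //; exact: ltW.
have hpM y : X y -> hp y <= Mc * U y.
  move=> Xy; apply: (@le_trans _ _ M').
    have a := V1M _ Xy; have b := V20 _ Xy.
    rewrite /hp /M' ge_max !le_max lexx !orbT andbT.
    by apply/orP; left; lra.
  rewrite /Mc mulrAC ler_pdivlMr //; apply: ler_wpM2l => //; exact: Uc.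
have step n : forall y, X y -> ((n%:R * hp y)%:E <= (Mc * W y)%:E)%E.
  elim: n => [|n IH] y Xy.
    by rewrite mul0r lee_fin; apply: mulr_ge0 => //; exact: W0.
  rewrite -addn1 natrD mulrDl mul1r EFinD.
  apply: (@le_trans _ _ ((n%:R%:E * K (fun y => (hp y)%:E) y) + (hp y)%:E)%E).
    by apply: leeD2r; rewrite EFinM; apply: lee_wpmul2l; [rewrite lee_fin|exact: fact1].
  apply: (@le_trans _ _ ((Mc%:E * (W y - U y)%:E) + (hp y)%:E)%E); last first.
    by rewrite -EFinM -EFinD lee_fin; have := hpM _ Xy; lra.
  have f0h : forall t, setT t -> (0 <= Dl t y * (hp (F t y))%:E)%E.
    by move=> t _; apply: mule_ge0; [exact: Dloc_ge0|rewrite lee_fin hpE].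
  have f0W : forall t, setT t -> (0 <= Dl t y * (W (F t y))%:E)%E.
    by move=> t _; apply: mule_ge0; [exact: Dloc_ge0|rewrite lee_fin; apply: W0; exact: FX].
  have n0 : (0 <= n%:R%:E :> \bar R)%E by rewrite lee_fin.
  have Mc0' : (0 <= Mc%:E)%E by rewrite lee_fin.
  apply: leeD2r; rewrite /Kp -(ge0_integralZl mu measurableT (mfun_sec_t _ y mhp) f0h n0).
  apply: (@le_trans _ _ (Mc%:E * Kop mu X F (fun y => (W y)%:E) y)%E); last first.
    by apply: lee_wpmul2l => //; exact: KW.
  rewrite /Kop -(ge0_integralZl mu measurableT (mfun_sec_t _ y m_W) f0W Mc0').
  apply: ge0_le_integral => //.
  - move=> t _; apply: mule_ge0; [by rewrite lee_fin|apply: mule_ge0; [exact: Dloc_ge0|by rewrite lee_fin hpE]].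
  - by apply: measurable_funeM; exact: (mfun_sec_t _ y mhp).
  - by apply: measurable_funeM; exact: (mfun_sec_t _ y m_W).
  - move=> t _; rewrite muleCA [X in (_ <= X)%E]muleCA.
    apply: lee_wpmul2l; first exact: Dloc_ge0.
    by rewrite -!EFinM; exact: IH (FX t _ Xy).
move=> Xx.
have [//|h0] := leP (V1 x) (V2 x).
have hx : 0 < hp x by rewrite /hp lt_max subr_gt0 h0.
have := step (Num.trunc (Mc * W x / hp x)).+1 x Xx.
rewrite lee_fin -ler_pdivlMr // => H.
have := truncnS_gt (Mc * W x / hp x).
by rewrite ltNge H.
Qed.
End uniq.
End markov.

Theorem theorem1 (R : realType) (d : nat)
  (dO dT : measure_display) (Omega : measurableType dO) (Theta : measurableType dT)
  (P : probability Omega R) (mu : probability Theta R)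
  (X : set (d.-tuple R))
  (F : Theta -> d.-tuple R -> d.-tuple R)
  (theta : nat -> Omega -> Theta)
  (U W : d.-tuple R -> R) :
  (* the random mapping f = F t (t ~ mu) maps X into X *)
  (forall t x, X x -> X (F t x)) ->
  (* measurability of the random mapping and of its local Lipschitz constant *)
  measurable_fun setT (fun p : Theta * d.-tuple R => F p.1 p.2) ->
  measurable_fun setT
    ((fun p : Theta * d.-tuple R => Dloc X (F p.1) p.2) : _ -> \bar R) ->
  (* f is almost surely locally Lipschitz *)
  {ae mu, forall t, loc_lipschitz X (F t)} ->
  (* f_{n+1} = F (theta n), n >= 0, are iid copies of f *)
  iid_seq P mu theta ->
  (* U : X -> R_+ with inf_X U > 0 *)
  measurable_fun setT U ->
  (exists2 c : R, 0 < c & forall x, X x -> c <= U x) ->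
  (* W_* : a non-negative finite solution of K W <= W - U *)
  measurable_fun setT W ->
  (forall x, X x -> 0 <= W x) ->
  (forall x, X x -> (Kop mu X F (fun y => (W y)%:E) x <= (W x - U x)%:E)%E) ->
  (* conclusions *)
  [/\ (forall x, X x -> (Vstar P X F theta U x < +oo)%E),
      (forall x, X x ->
         Kop mu X F (Vstar P X F theta U) x = (Vstar P X F theta U x - (U x)%:E)%E) &
      (forall V1 V2 : d.-tuple R -> R,
         measurable_fun setT V1 -> measurable_fun setT V2 ->
         (forall x, X x -> 0 <= V1 x) -> (forall x, X x -> 0 <= V2 x) ->
         (exists M : R, forall x, X x -> V1 x <= M) ->
         (exists M : R, forall x, X x -> V2 x <= M) ->
         (forall x, X x -> Kop mu X F (fun y => (V1 y)%:E) x = (V1 x - U x)%:E) ->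
         (forall x, X x -> Kop mu X F (fun y => (V2 y)%:E) x = (V2 x - U x)%:E) ->
         forall x, X x -> V1 x = V2 x)].
Proof.
Proof.
move=> FX mF mDl _ [mth lawth indth] mU [c c0 Uc] mW W0 KW.
split.
- move=> x Xx.
  exact: (@part1 _ _ _ _ _ _ _ _ _ _ _ mth lawth indth mF mDl _ _ FX mU _ c0 Uc mW W0 KW _ Xx).
- move=> x Xx.
  exact: (@part2 _ _ _ _ _ _ _ _ _ _ _ mth lawth indth mF mDl _ FX mU _ c0 Uc _ Xx).
- move=> V1 V2 mV1 mV2 V10 V20 [M1 HM1] [M2 HM2] K1 K2 x Xx.
  apply/eqP; rewrite eq_le; apply/andP; split.
  + exact: (@uniq_le _ _ _ _ _ _ _ mF mDl _ _ FX _ c0 Uc mW W0 KW _ _ mV1 mV2 V10 V20 _ HM1 K1 K2 _ Xx).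
  + exact: (@uniq_le _ _ _ _ _ _ _ mF mDl _ _ FX _ c0 Uc mW W0 KW _ _ mV2 mV1 V20 V10 _ HM2 K2 K1 _ Xx).
Qed.
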